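(* Let $p\ge 3$ be an odd integer. Then the minimum number of copies of $B_p$ in a graph of order $p+2$ and size $\mathrm{ex}(p+2,B_p)+1$ is $3$, and the minimum number of copies of $B_p$ in a graph of order $p+3$ and size $\mathrm{ex}(p+3,B_p)+1$ is $3(p+1)$.
   Context: All graphs are finite and simple. The order of a graph is its number of vertices and its size is its number of edges. A copy of $H$ in $G$ is a subgraph of $G$ isomorphic to $H$; the number of copies of $H$ in $G$ is the number of distinct subgraphs of $G$ isomorphic to $H$. For a graph $H$ and a positive integer $n$, the Turán number $\mathrm{ex}(n,H)$ is the maximum size of a simple graph of order $n$ containing no copy of $H$. The book $B_p$ with $p$ pages is the graph consisting of $p$ triangles sharing a common edge (so $B_p$ has $p+2$ vertices and $2p+1$ edges). *)

(* Defs.v *)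
From mathcomp Require Import all_boot.
Set Implicit Arguments. Unset Strict Implicit. Unset Printing Implicit Defensive.

Definition graph (n : nat) := {set {set 'I_n}}.

Definition is_graph (n : nat) (G : graph n) : bool :=
  [forall e in G, #|e| == 2].

Definition is_copy (m n : nat) (H : graph m) (G : graph n)
    (S : {set 'I_n} * graph n) : bool :=
  [&& S.2 \subset G,
      [forall e in S.2, e \subset S.1] &
      [exists f : {ffun 'I_m -> 'I_n},
         [&& injectiveb f, f @: setT == S.1 &
             [forall i, forall j,
                ([set f i; f j] \in S.2) == ([set i; j] \in H)]]]].

Definition copies (m n : nat) (H : graph m) (G : graph n) : nat :=
  #|[set S | is_copy H G S]|.

Definition ex (m : nat) (n : nat) (H : graph m) : nat :=
  \max_(G : graph n | is_graph G && (copies H G == 0)) #|G|.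

(* The book B_p on 'I_(p+2): spine {0,1}, pages {0,i},{1,i} for i >= 2. *)
Definition book (p : nat) : graph p.+2 :=
  [set e : {set 'I_p.+2} |
     (e == [set ord0; inord 1]) ||
     [exists i : 'I_p.+2, (2 <= i) &&
        ((e == [set ord0; i]) || (e == [set inord 1; i]))]].

(* Main.v *)
Require Import Defs.
From mathcomp Require Import all_boot zify.
Set Implicit Arguments. Unset Strict Implicit. Unset Printing Implicit Defensive.

Lemma set2_eq (T : finType) (a b c d : T) : a != b ->
  [set a; b] = [set c; d] -> (a = c /\ b = d) \/ (a = d /\ b = c).
Proof.
move=> nab E.
have ha : a \in [set c; d] by rewrite -E set21.
have hb : b \in [set c; d] by rewrite -E set22.
have hc : c \in [set a; b] by rewrite E set21.
have hd : d \in [set a; b] by rewrite E set22.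
case/set2P: ha => ea; case/set2P: hb => eb; subst.
- by rewrite eqxx in nab.
- by left.
- by right.
- by rewrite eqxx in nab.
Qed.

Lemma set2C (T : finType) (a b : T) : [set a; b] = [set b; a].
Proof. by rewrite setUC. Qed.

Lemma ord_le1 p (i : 'I_p.+2) : i <= 1 -> i = ord0 \/ i = inord 1.
Proof.
move=> h; case: (ltnP i 1) => h1.
  by left; apply: val_inj => /=; lia.
by right; apply: val_inj => /=; rewrite inordK //; lia.
Qed.

Lemma val_inord1 p : ((inord 1 : 'I_p.+2) : nat) = 1.
Proof. by rewrite inordK. Qed.

Lemma book_mem p (i j : 'I_p.+2) :
  ([set i; j] \in book p) = (i != j) && ((i <= 1) || (j <= 1)).
Proof.
rewrite /book inE; apply/idP/idP.
- case/orP.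
  + move/eqP => E; have n01 : (ord0 : 'I_p.+2) != inord 1.
      by apply/eqP => /(congr1 val); rewrite /= val_inord1.
    case: (set2_eq n01 (esym E)) => [[<- <-]|[<- <-]];
      rewrite /= ?val_inord1 ?n01 //= eq_sym n01 //.
  + case/existsP => k /andP [k2 /orP [] /eqP E].
    * have n0k : (ord0 : 'I_p.+2) != k.
        by apply/eqP => /(congr1 val) /= h; rewrite -h in k2.
      case: (set2_eq n0k (esym E)) => [[<- <-]|[<- <-]];
        rewrite ?n0k ?orbT //= eq_sym n0k ?orbT //.
    * have n1k : (inord 1 : 'I_p.+2) != k.
        by apply/eqP => /(congr1 val) /=; rewrite val_inord1 => h; rewrite -h in k2.
      case: (set2_eq n1k (esym E)) => [[<- <-]|[<- <-]];
        rewrite ?n1k ?val_inord1 ?orbT //= eq_sym n1k ?val_inord1 ?orbT //.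
- case/andP => nij.
  wlog: i j nij / i <= 1.
    move=> W /orP [] h; first by apply: W => //; rewrite h.
    by rewrite set2C; apply: W => //; rewrite 1?eq_sym // h.
  move=> hi _; case: (leqP j 1) => hj.
  + apply/orP; left.
    case: (ord_le1 hi) => ei; case: (ord_le1 hj) => e; subst i j;
      first [by rewrite eqxx in nij | by rewrite eqxx | by rewrite set2C eqxx].
  + apply/orP; right; apply/existsP; exists j; rewrite hj /=.
    by case: (ord_le1 hi) => ->; rewrite eqxx ?orbT.
Qed.

Definition mkF (n : nat) (s P : {set 'I_n}) : graph n :=
  s |: [set [set x; w] | x in s, w in P].

Lemma memF n (s P : {set 'I_n}) a b : #|s| = 2 -> [disjoint s & P] ->
  ([set a; b] \in mkF s P) =
  (a != b) && ((a \in s) && ((b \in s) || (b \in P)) || (a \in P) && (b \in s)).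
Proof.
move=> cs dsP; rewrite /mkF in_setU1; apply/idP/idP.
- case/orP.
  + move/eqP => E.
    have nab : a != b by apply/eqP => eab; move: cs; rewrite -E eab setUid cards1.
    by rewrite nab -E set21 set22.
  + case/imset2P => x w xs wP E.
    have nxw : x != w by apply/negP => /eqP e; subst; rewrite (disjointFr dsP xs) in wP.
    case: (set2_eq nxw (esym E)) => [[<- <-]|[<- <-]].
    * by rewrite nxw xs wP orbT.
    * by rewrite eq_sym nxw xs wP orbT.
- case/andP => nab /orP [/andP [sa /orP [] sb] | /andP [Pa sb]].
  + apply/orP; left; rewrite eqEcard cs cards2 nab andbT.
    by apply/subsetP => z /set2P [] ->.
  + by apply/orP; right; apply/imset2P; exists a b.
  + by apply/orP; right; apply/imset2P; exists b a => //; rewrite set2C.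
Qed.

Lemma disjP (T : finType) (A B : {set T}) :
  (forall x, x \in A -> x \notin B) -> [disjoint A & B].
Proof. by move=> h; rewrite disjoints_subset; apply/subsetP => x /h; rewrite inE. Qed.

Lemma i_le1 p (i : 'I_p.+2) : (i == ord0) || (i == inord 1) = (i <= 1).
Proof.
rewrite -!(inj_eq val_inj) /= val_inord1.
by case: i => [[|[|k]] hk].
Qed.

Lemma notin01 p (i : 'I_p.+2) : (i \in ~:[set ord0; inord 1]) = (1 < i).
Proof. by rewrite inE in_set2 i_le1 ltnNge. Qed.

Lemma card01C p : #|~:[set (ord0 : 'I_p.+2); inord 1]| = p.
Proof.
have := cardsC [set (ord0 : 'I_p.+2); inord 1].
rewrite cards2 card_ord.
have -> : (ord0 : 'I_p.+2) != inord 1 by apply/eqP => /(congr1 val); rewrite /= val_inord1.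
by move=> h; lia.
Qed.

Lemma imset2s (T U : finType) (f : T -> U) a b : f @: [set a; b] = [set f a; f b].
Proof. by rewrite imsetU1 imset_set1. Qed.

Lemma split01 p : [set: 'I_p.+2] = [set ord0; inord 1] :|: ~:[set ord0; inord 1].
Proof. by rewrite setUCr. Qed.


Lemma f_s p n (f : 'I_p.+2 -> 'I_n) (fi : injective f) i : (f i \in [set f ord0; f (inord 1)]) = (i <= 1).
Proof. by rewrite in_set2 !(inj_eq fi) i_le1. Qed.

Lemma f_P p n (f : 'I_p.+2 -> 'I_n) (fi : injective f) i : (f i \in f @: ~:[set ord0; inord 1]) = (1 < i).
Proof. by rewrite mem_imset // notin01. Qed.

Lemma f_card_s p n (f : 'I_p.+2 -> 'I_n) (fi : injective f) : #|[set f ord0; f (inord 1)]| = 2.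
Proof.
rewrite cards2 (inj_eq fi).
by have -> : (ord0 : 'I_p.+2) != inord 1 by apply/eqP => /(congr1 val); rewrite /= val_inord1.
Qed.

Lemma f_disj p n (f : 'I_p.+2 -> 'I_n) (fi : injective f) : [disjoint [set f ord0; f (inord 1)] & f @: ~:[set ord0; inord 1]].
Proof.
apply: disjP => x /set2P [] ->; rewrite (f_P fi) ?val_inord1 //.
Qed.

Lemma Lkey p n (f : 'I_p.+2 -> 'I_n) (fi : injective f) i j : ([set f i; f j] \in mkF [set f ord0; f (inord 1)] (f @: ~:[set ord0; inord 1]))
   = ([set i; j] \in book p).
Proof.
rewrite memF ?(f_card_s fi) ?(f_disj fi) // book_mem !(f_s fi) !(f_P fi) (inj_eq fi).
case: (i != j) => //=.
case: (leqP i 1); case: (leqP j 1) => //=.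
Qed.

Lemma f_img p n (f : 'I_p.+2 -> 'I_n) : f @: [set: 'I_p.+2] = [set f ord0; f (inord 1)] :|: f @: ~:[set ord0; inord 1].
Proof. by rewrite {1}split01 imsetU imset2s. Qed.


Definition Cfg n (p : nat) (G : graph n) : {set {set 'I_n} * {set 'I_n}} :=
  [set sP : {set 'I_n} * {set 'I_n} | [&& #|sP.1| == 2, #|sP.2| == p, [disjoint sP.1 & sP.2], sP.1 \in G &
     [forall x in sP.1, forall w in sP.2, [set x; w] \in G]]].

Definition mkcopy n (sP : {set 'I_n} * {set 'I_n}) : {set 'I_n} * graph n :=
  (sP.1 :|: sP.2, mkF sP.1 sP.2).

Lemma CfgP n p (G : graph n) (s P : {set 'I_n}) :
  reflect [/\ #|s| = 2, #|P| = p, [disjoint s & P], s \in G &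
     forall x w, x \in s -> w \in P -> [set x; w] \in G] ((s, P) \in Cfg p G).
Proof.
rewrite inE /=; apply: (iffP idP).
- case/and5P => /eqP h1 /eqP h2 h3 h4 /forallP h5; split => // x w xs wP.
  by move: (h5 x) => /implyP /(_ xs) /forallP /(_ w) /implyP /(_ wP).
- case=> h1 h2 h3 h4 h5; apply/and5P; split => //; try by apply/eqP.
  by apply/forallP => x; apply/implyP => xs; apply/forallP => w; apply/implyP => wP; apply: h5.
Qed.

Lemma build_f p n (u v : 'I_n) (P : {set 'I_n}) : u != v -> u \notin P -> v \notin P ->
  #|P| = p ->
  exists f : 'I_p.+2 -> 'I_n, [/\ injective f, f ord0 = u, f (inord 1) = v &
                                 (f @: ~:[set (ord0 : 'I_p.+2); inord 1]) = P].
Proof.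
move=> nuv uP vP cP.
set e := enum P.
have se : size e = p by rewrite -cardE.
pose g (k : nat) := if k == 0 then u else if k == 1 then v else nth u e (k - 2).
have gP k : 1 < k -> k < p.+2 -> g k \in P.
  move=> h1 h2; rewrite /g; case: eqP => [?|_]; first lia.
  case: eqP => [?|_]; first lia.
  by rewrite -mem_enum; apply: mem_nth; rewrite -/e se; lia.
exists (fun i => g i); split.
- have nth_in k : k < p -> nth u e k \in P.
    by move=> h; rewrite -mem_enum; apply: mem_nth; rewrite -/e se.
  case=> [[|[|i]] hi]; case=> [[|[|j]] hj]; rewrite /g /= ?subSS ?subn0 => h;
    try by apply: val_inj.
  + by rewrite h eqxx in nuv.
  + by move: uP; rewrite h nth_in.
  + by rewrite h eqxx in nuv.
  + by move: vP; rewrite h nth_in.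
  + by move: uP; rewrite -h nth_in.
  + by move: vP; rewrite -h nth_in.
  + apply: val_inj => /=; congr (_.+2); apply/eqP.
    by rewrite -(@nth_uniq _ u e) ?enum_uniq ?se // h.
- by [].
- by rewrite /g val_inord1.
- apply/setP => w; apply/imsetP/idP.
  + case=> i; rewrite notin01 => hi ->; apply: gP => //.
  + move=> wP.
    have wi : index w e < p by rewrite -se index_mem mem_enum.
    exists (inord (index w e).+2); first by rewrite notin01 inordK //; lia.
    rewrite /g inordK; last lia.
    by rewrite /= subn2 /= nth_index // mem_enum.
Qed.

Lemma copy_of_cfg n p (G : graph n) sP : sP \in Cfg p G -> is_copy (book p) G (mkcopy sP).
Proof.
case: sP => s P /CfgP [cs cP dsP sG hG].
have: #|s| == 2 by rewrite cs.
case/cards2P => u [v [nuv es]].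
have uP : u \notin P by rewrite (disjointFr dsP) // es set21.
have vP : v \notin P by rewrite (disjointFr dsP) // es set22.
have [f [fi f0 f1 fP]] := build_f nuv uP vP cP.
have es' : s = [set f ord0; f (inord 1)] by rewrite f0 f1.
rewrite /is_copy /mkcopy /=; apply/and3P; split.
- apply/subsetP => e; rewrite /mkF in_setU1 => /orP [/eqP -> // | /imset2P [x w xs wP ->]].
  exact: hG.
- apply/forallP => e; apply/implyP; rewrite /mkF in_setU1.
  case/orP => [/eqP -> | /imset2P [x w xs wP ->]]; apply/subsetP => z.
  + by move=> zs; rewrite inE zs.
  + by case/set2P => ->; rewrite inE ?xs ?wP ?orbT.
- apply/existsP; exists (finfun f).
  have -> : finfun f @: setT = f @: setT by apply: eq_imset => i; rewrite ffunE.
  apply/and3P; split.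
  + by apply/injectiveP => i j; rewrite !ffunE; exact: fi.
  + by rewrite f_img -es' fP.
  + apply/forallP => i; apply/forallP => j; rewrite !ffunE es' -fP Lkey //.
Qed.

Lemma pair_img p n (f : 'I_p.+2 -> 'I_n) (e : {set 'I_n}) :
  #|e| == 2 -> e \subset f @: setT -> exists i j, e = [set f i; f j].
Proof.
case/cards2P => a [b [_ ->]] /subsetP h.
have /imsetP [i _ ->] := h a (set21 _ _).
have /imsetP [j _ ->] := h b (set22 _ _).
by exists i, j.
Qed.

Lemma mkF_elem n (s P : {set 'I_n}) e : #|s| = 2 -> [disjoint s & P] ->
  e \in mkF s P -> (#|e| == 2) && (e \subset s :|: P).
Proof.
move=> cs dsP; rewrite /mkF in_setU1.
case/orP => [/eqP -> | /imset2P [x w xs wP ->]].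
- by rewrite cs eqxx subsetUl.
- have nxw : x != w by apply/negP => /eqP e1; subst; rewrite (disjointFr dsP xs) in wP.
  rewrite cards2 nxw eqxx /=; apply/subsetP => z.
  by case/set2P => ->; rewrite inE ?xs ?wP ?orbT.
Qed.

Lemma cfg_of_copy n p (G : graph n) S : is_graph G -> is_copy (book p) G S ->
  exists2 sP, sP \in Cfg p G & S = mkcopy sP.
Proof.
case: S => V F; rewrite /is_copy /= => gG.
case/and3P => FG FV /existsP [f' /and3P [/injectiveP fi /eqP fV /forallP fE]].
have n01 : (ord0 : 'I_p.+2) != inord 1.
  by apply/eqP => /(congr1 val); rewrite /= val_inord1.
have fE' i j : ([set f' i; f' j] \in F) = ([set i; j] \in book p).
  by move: (fE i) => /forallP /(_ j) /eqP.
exists ([set f' ord0; f' (inord 1)], f' @: ~:[set ord0; inord 1]).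
- apply/CfgP; split.
  + exact: f_card_s.
  + by rewrite card_imset // card01C.
  + exact: f_disj.
  + apply: (subsetP FG); rewrite fE' book_mem n01.
    by [].
  + move=> x w /set2P hx /imsetP [j hj ->].
    rewrite notin01 in hj.
    have [i [hi ->]] : exists i : 'I_p.+2, i <= 1 /\ x = f' i.
      by case: hx => ->; [exists ord0 | exists (inord 1); rewrite val_inord1].
    apply: (subsetP FG); rewrite fE' book_mem hi /= andbT.
    by apply/eqP => eij; rewrite -eij in hj; lia.
- rewrite /mkcopy /=; congr pair.
  + by rewrite -fV f_img.
  + apply/setP => e; apply/idP/idP => he.
    * have e2 : #|e| == 2 by move/forallP: gG => /(_ e) /implyP; apply; apply: (subsetP FG).
      have sub : e \subset f' @: setT.
        by rewrite fV; move: (forallP FV e) => /implyP; apply.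
      have [i [j Ee]] := pair_img e2 sub.
      by rewrite Ee (Lkey fi) -fE' -Ee.
    * have /andP [e2 sub] := mkF_elem (f_card_s fi) (f_disj fi) he.
      rewrite -f_img in sub.
      have [i [j Ee]] := pair_img e2 sub.
      by move: he; rewrite Ee (Lkey fi) -fE'.
Qed.

Lemma mkcopy_inj n p (G : graph n) : 3 <= p -> {in Cfg p G &, injective (@mkcopy n)}.
Proof.
move=> p3 [s P] [s' P'] /CfgP [cs cP dP _ _] /CfgP [cs' cP' dP' _ _] [EV EF].
have ss : s \subset s'.
  apply/subsetP => w ws; apply/negPn/negP => ws'.
  have wP' : w \in P'.
    have: w \in s' :|: P' by rewrite -EV inE ws.
    by rewrite inE (negbTE ws').
  have : ~~ (P \subset s') by apply/negP => /subset_leq_card; lia.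
  case/subsetPn => y yP ys'.
  have nwy : w != y by apply/negP => /eqP e1; subst; rewrite (disjointFr dP ws) in yP.
  have : [set w; y] \in mkF s P by rewrite memF // ws yP nwy orbT.
  by rewrite EF memF // (negbTE ws') wP' (negbTE ys') /= andbF.
have es : s = s' by apply/eqP; rewrite eqEcard ss cs cs' /=.
subst s'; congr pair; apply/setP => x.
have := congr1 (fun A : {set 'I_n} => x \in A) EV; rewrite /= !inE.
case xs: (x \in s) => /=.
- by rewrite (disjointFr dP xs) (disjointFr dP' xs).
- by [].
Qed.

Lemma copies_eq n p (G : graph n) : is_graph G -> 3 <= p ->
  copies (book p) G = #|Cfg p G|.
Proof.
move=> gG p3; rewrite /copies.
have -> : [set S | is_copy (book p) G S] = (@mkcopy n) @: Cfg p G.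
  apply/setP => S; rewrite inE; apply/idP/imsetP.
  - by move/(cfg_of_copy gG).
  - by case=> sP h ->; exact: copy_of_cfg.
by rewrite card_in_imset //; exact: mkcopy_inj.
Qed.

Definition nonedges n (G : graph n) : graph n := [set e : {set 'I_n} | (#|e| == 2) && (e \notin G)].

Lemma card_nonedges n (G : graph n) : is_graph G -> #|G| + #|nonedges G| = 'C(n, 2).
Proof.
move=> gG.
have E : [set e : {set 'I_n} | #|e| == 2] = G :|: nonedges G.
  apply/setP => e; rewrite !inE.
  case eG: (e \in G) => /=; last by rewrite andbT.
  by move/forallP: gG => /(_ e) /implyP /(_ eG) ->.
have D : G :&: nonedges G = set0.
  by apply/setP => e; rewrite !inE; case: (e \in G); rewrite ?andbF.
have C := @card_draws ('I_n) 2; rewrite card_ord in C.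
by rewrite -C E -cardsUI D cards0 addn0.
Qed.

Lemma full_adj n (G : graph n) x y : x \notin cover (nonedges G) -> y != x ->
  [set x; y] \in G.
Proof.
move=> xc nyx; apply/negPn/negP => h; move/negP: xc; apply.
apply/bigcupP; exists [set x; y]; last by rewrite set21.
by rewrite inE cards2 (eq_sym x y) nyx h.
Qed.

Lemma sum_nonedges n (G : graph n) : \sum_(e in nonedges G) #|e| = 2 * #|nonedges G|.
Proof.
rewrite (eq_bigr (fun _ => 2)); first by rewrite sum_nat_const mulnC.
by move=> e; rewrite inE => /andP [/eqP].
Qed.

Lemma cover_le n (G : graph n) : #|cover (nonedges G)| <= 2 * #|nonedges G|.
Proof. by rewrite -sum_nonedges; exact: (leq_card_cover _).1. Qed.

Lemma cfg_full n p (G : graph n) (s P : {set 'I_n}) :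
  #|s| = 2 -> #|P| = p -> [disjoint s & P] -> s \subset ~: cover (nonedges G) ->
  (s, P) \in Cfg p G.
Proof.
move=> cs cP dP sA; apply/CfgP; split => //.
- have: #|s| == 2 by rewrite cs.
  case/cards2P => a [b [nab es]].
  have aA := subsetP sA a; rewrite es set21 inE in aA.
  by rewrite es; apply: full_adj; [exact: aA | rewrite eq_sym].
- move=> x w xs wP; apply: full_adj.
  + by have := subsetP sA x xs; rewrite inE.
  + by apply/negP => /eqP e; subst; rewrite (disjointFr dP xs) in wP.
Qed.

Lemma LB1 p q (G : graph p.+2) : p = q.*2.+1 -> is_graph G ->
  #|nonedges G| <= q -> 3 <= #|Cfg p G|.
Proof.
move=> pq gG hN.
set A := ~: cover (nonedges G).
have cA : 3 <= #|A|.
  have := cardsC (cover (nonedges G)); rewrite card_ord -/A.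
  have := cover_le G; lia.
have sub : (fun s => (s, ~: s)) @: [set s : {set 'I_p.+2} | s \subset A & #|s| == 2]
           \subset Cfg p G.
  apply/subsetP => x /imsetP [s]; rewrite inE => /andP [sA /eqP cs] ->.
  apply: cfg_full => //.
  + by have := cardsC s; rewrite card_ord cs; lia.
  + by apply: disjP => z zs; rewrite inE zs.
apply: leq_trans (subset_leq_card sub).
rewrite card_imset; last by move=> s1 s2 [].
rewrite cards_draws.
by apply: leq_trans (leq_bin2l 2 cA).
Qed.

Lemma three_fam (T : finType) (C X1 X2 X3 : {set T}) k :
  X1 \subset C -> X2 \subset C -> X3 \subset C ->
  [disjoint X1 & X2] -> [disjoint X1 & X3] -> [disjoint X2 & X3] ->
  k <= #|X1| -> k <= #|X2| -> k <= #|X3| -> 3 * k <= #|C|.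
Proof.
move=> s1 s2 s3 d12 d13 d23 k1 k2 k3.
have e12 : #|X1 :|: X2| = #|X1| + #|X2| by apply/eqP; rewrite (leq_card_setU X1 X2).2.
have d : [disjoint X1 :|: X2 & X3].
  apply: disjP => x; rewrite inE => /orP [] h; first by rewrite (disjointFr d13 h).
  by rewrite (disjointFr d23 h).
have e123 : #|X1 :|: X2 :|: X3| = #|X1 :|: X2| + #|X3|
  by apply/eqP; rewrite (leq_card_setU _ X3).2.
have sub : X1 :|: X2 :|: X3 \subset C by rewrite !subUset s1 s2 s3.
have := subset_leq_card sub; rewrite e123 e12; lia.
Qed.

Lemma disj_fst (S S' : finType) (X Y : {set S * S'}) :
  (forall x y, x \in X -> y \in Y -> x.1 != y.1) -> [disjoint X & Y].
Proof.
move=> h; apply: disjP => x xX; apply/negP => xY.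
by have := h x x xX xY; rewrite eqxx.
Qed.

Definition Fam n (s : {set 'I_n}) : {set {set 'I_n} * {set 'I_n}} :=
  (fun z => (s, ~:(z |: s))) @: ~: s.

Lemma Fam_fst n (s : {set 'I_n}) x : x \in Fam s -> x.1 = s.
Proof. by case/imsetP => z _ ->. Qed.

Lemma Fam_card n (s : {set 'I_n}) : #|Fam s| = #|~: s|.
Proof.
rewrite card_in_imset // => z z' hz hz' [] /setC_inj E.
have : z \in z' |: s by rewrite -E setU11.
case/setU1P => // zs; by rewrite inE zs in hz.
Qed.

Lemma card_comp3 n (s : {set 'I_n}) z : #|s| = 2 -> z \notin s -> #|~:(z |: s)| = n - 3.
Proof.
move=> cs zs; have := cardsC (z |: s); rewrite cardsU1 zs cs card_ord; lia.
Qed.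

Lemma Fam_sub p (G : graph p.+3) (s : {set 'I_p.+3}) :
  #|s| = 2 -> s \subset ~: cover (nonedges G) -> Fam s \subset Cfg p G.
Proof.
move=> cs sA; apply/subsetP => x /imsetP [z hz ->].
rewrite inE in hz.
apply: cfg_full => //.
- by rewrite card_comp3 //; lia.
- by apply: disjP => y ys; rewrite !inE ys orbT.
Qed.

Definition pt n (G : graph n) (v : 'I_n) : 'I_n :=
  odflt v [pick z | [set v; z] \in nonedges G].

Lemma pt_spec n (G : graph n) v : v \in cover (nonedges G) -> [set v; pt G v] \in nonedges G.
Proof.
case/bigcupP => e eN ve.
rewrite /pt; case: pickP => [z hz // | none].
have := eN; rewrite inE => /andP [/cards2P [x [y [nxy Ee]]] _].
move: ve; rewrite Ee => /set2P [] E; subst.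
- by have := none y; rewrite eN.
- by have := none x; rewrite set2C eN.
Qed.

Lemma pt_uniq n (G : graph n) v w : trivIset (nonedges G) ->
  [set v; w] \in nonedges G -> w = pt G v.
Proof.
move=> /trivIsetP tr h.
have vc : v \in cover (nonedges G) by apply/bigcupP; exists [set v; w]; rewrite ?set21.
have h2 := pt_spec vc.
have nvw : v != w by move: h; rewrite inE cards2 => /andP []; case: (v != w).
case: (eqVneq [set v; w] [set v; pt G v]) => E.
- by case: (set2_eq nvw E) => [[_ ->] | [e1 e2]]; [ | rewrite -e1 e2].
- have := tr _ _ h h2 E.
  by move/disjointFr => /(_ v (set21 _ _)); rewrite set21.
Qed.

Definition Fam2 n (G : graph n) (a : 'I_n) : {set {set 'I_n} * {set 'I_n}} :=
  (fun v => ([set a; v], ~:(pt G v |: [set a; v]))) @: cover (nonedges G).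

Lemma Fam2_fst n (G : graph n) a x : x \in Fam2 G a ->
  exists2 v, v \in cover (nonedges G) & x.1 = [set a; v].
Proof. by case/imsetP => v hv ->; exists v. Qed.

Lemma Fam2_card n (G : graph n) a : a \notin cover (nonedges G) ->
  #|Fam2 G a| = #|cover (nonedges G)|.
Proof.
move=> ac; rewrite card_in_imset // => v v' hv hv' [] E _.
have : v \in [set a; v'] by rewrite -E set22.
case/set2P => // e; subst; by rewrite hv in ac.
Qed.

Lemma Fam2_sub p (G : graph p.+3) a : trivIset (nonedges G) ->
  a \notin cover (nonedges G) -> Fam2 G a \subset Cfg p G.
Proof.
move=> tr ac; apply/subsetP => x /imsetP [v vc ->].
have nva : v != a by apply/negP => /eqP e; subst; rewrite vc in ac.
have hpt := pt_spec vc.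
set z := pt G v in hpt *.
have zc : z \in cover (nonedges G) by apply/bigcupP; exists [set v; z]; rewrite ?set22.
have nvz : v != z by move: hpt; rewrite inE cards2 => /andP []; case: (v != z).
have zs : z \notin [set a; v].
  rewrite in_set2; apply/norP; split; apply/negP => /eqP e.
  - by rewrite e in zc; rewrite zc in ac.
  - by rewrite e eqxx in nvz.
have cs : #|[set a; v]| = 2 by rewrite cards2 eq_sym nva.
apply/CfgP; split => //.
- by rewrite card_comp3 //; lia.
- by apply: disjP => y ys; rewrite inE negbK; apply/setU1P; right.
- exact: full_adj.
- move=> x0 w hx wP; move: wP; rewrite !inE => H.
  have nwz : w != z by apply: contra H => /eqP ->; rewrite eqxx.
  have nwa : w != a by apply: contra H => /eqP ->; rewrite eqxx orbT.
  have nwv : w != v by apply: contra H => /eqP ->; rewrite eqxx !orbT.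
  case/set2P: hx => ->.
  + exact: full_adj.
  + apply/negPn/negP => h.
    have : [set v; w] \in nonedges G by rewrite inE cards2 (eq_sym v w) nwv h.
    by move/(pt_uniq tr); rewrite -/z => e; rewrite e eqxx in nwz.
Qed.

Lemma LB2 p q (G : graph p.+3) : p = q.*2.+1 -> is_graph G ->
  #|nonedges G| <= q.+1 -> 3 * p.+1 <= #|Cfg p G|.
Proof.
move=> pq gG hN.
have hC := cardsC (cover (nonedges G)); rewrite card_ord in hC.
have hcl := cover_le G.
set N := nonedges G in hN hC hcl *.
set A := ~: cover N in hC.
have cFam (s : {set 'I_p.+3}) : #|s| = 2 -> p.+1 <= #|Fam s|.
  by move=> cs; rewrite Fam_card; have := cardsC s; rewrite card_ord cs; lia.
have pairA (a b : 'I_p.+3) : a \in A -> b \in A -> a != b ->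
    #|[set a; b]| = 2 /\ [set a; b] \subset A.
  move=> aA bA nab; rewrite cards2 nab; split => //.
  by apply/subsetP => z /set2P [] ->.
have notin2 (x a c : 'I_p.+3) : x != a -> x != c -> x \notin [set a; c].
  by move=> h1 h2; rewrite in_set2 negb_or h1 h2.
case: (leqP 3 #|A|) => hA.
- have : 0 < #|A| by lia.
  case/card_gt0P => a aA.
  have h1 := cardsD1 a A; rewrite aA in h1.
  have : 0 < #|A :\ a| by lia.
  case/card_gt0P => b; rewrite in_setD1 => /andP [nba bA].
  have h2 := cardsD1 b (A :\ a); rewrite in_setD1 nba bA in h2.
  have : 0 < #|A :\ a :\ b| by lia.
  case/card_gt0P => c; rewrite !in_setD1 => /and3P [ncb nca cA].
  have nab : a != b by rewrite eq_sym.
  have nac : a != c by rewrite eq_sym.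
  have nbc : b != c by rewrite eq_sym.
  have [c1 s1] := pairA a b aA bA nab.
  have [c2 s2] := pairA a c aA cA nac.
  have [c3 s3] := pairA b c bA cA nbc.
  apply: (three_fam (X1 := Fam [set a; b]) (X2 := Fam [set a; c]) (X3 := Fam [set b; c]));
    rewrite ?Fam_sub ?cFam //.
  + apply: disj_fst => x y hx hy; rewrite (Fam_fst hx) (Fam_fst hy).
    by apply/negP => /eqP E; move: (set22 a b); rewrite E; apply/negP; apply: notin2; rewrite 1?eq_sym.
  + apply: disj_fst => x y hx hy; rewrite (Fam_fst hx) (Fam_fst hy).
    by apply/negP => /eqP E; move: (set21 a b); rewrite E; apply/negP; apply: notin2.
  + apply: disj_fst => x y hx hy; rewrite (Fam_fst hx) (Fam_fst hy).
    by apply/negP => /eqP E; move: (set21 a c); rewrite E; apply/negP; apply: notin2.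
- have : #|A| == 2 by rewrite eqn_leq; apply/andP; split; lia.
  case/cards2P => a [b [nab EA]].
  have aA : a \notin cover N by have := set21 a b; rewrite -EA inE.
  have bA : b \notin cover N by have := set22 a b; rewrite -EA inE.
  have cc : #|cover N| = p.+1 by rewrite EA cards2 nab in hC; lia.
  have tr : trivIset N.
    rewrite /trivIset sum_nonedges -/N; apply/eqP; lia.
  have ab2 : #|[set a; b]| = 2 by rewrite cards2 nab.
  have vin (v : 'I_p.+3) (x : 'I_p.+3) : v \in cover N -> x \notin cover N -> x != v.
    by move=> h1 h2; apply/negP => /eqP e; subst; rewrite h1 in h2.
  apply: (three_fam (X1 := Fam [set a; b]) (X2 := Fam2 G a) (X3 := Fam2 G b)).
  + by apply: Fam_sub; rewrite // -EA.
  + exact: Fam2_sub.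
  + exact: Fam2_sub.
  + apply: disj_fst => x y hx hy; rewrite (Fam_fst hx).
    case: (Fam2_fst hy) => v vc ->.
    by apply/negP => /eqP E; move: (set22 a b); rewrite E; apply/negP; apply: notin2;
      [rewrite eq_sym | apply: vin].
  + apply: disj_fst => x y hx hy; rewrite (Fam_fst hx).
    case: (Fam2_fst hy) => v vc ->.
    by apply/negP => /eqP E; move: (set21 a b); rewrite E; apply/negP; apply: notin2;
      [ | apply: vin].
  + apply: disj_fst => x y hx hy.
    case: (Fam2_fst hx) => v vc ->; case: (Fam2_fst hy) => v' vc' ->.
    by apply/negP => /eqP E; move: (set21 a v); rewrite E; apply/negP; apply: notin2;
      [ | apply: vin].
  + by rewrite cFam.
  + by rewrite Fam2_card // cc.
  + by rewrite Fam2_card // cc.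
Qed.

Definition mrel (c m x y : nat) : bool :=
  [&& c <= x, c <= y, x < c + m.*2, y < c + m.*2 & (x - c)./2 == (y - c)./2].

Definition mgraph n c m : graph n :=
  [set e : {set 'I_n} | [exists x : 'I_n, exists y : 'I_n,
     [&& e == [set x; y], x != y & ~~ mrel c m x y]]].

Lemma mrelC c m x y : mrel c m x y = mrel c m y x.
Proof.
rewrite /mrel; apply/idP/idP => /and5P [h1 h2 h3 h4 /eqP h5];
  apply/and5P; split => //; by rewrite h5.
Qed.

Lemma mem_mg n c m (x y : 'I_n) : ([set x; y] \in mgraph n c m) = (x != y) && ~~ mrel c m x y.
Proof.
rewrite inE; apply/idP/idP.
- case/existsP => x' /existsP [y' /and3P [/eqP E nxy hm]].
  have nxy' : x != y.
    by apply/negP => /eqP e; subst; move: (cards2 x' y'); rewrite -E setUid cards1 nxy.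
  case: (set2_eq nxy' E) => [[-> ->] | [-> ->]]; first by rewrite nxy.
  by rewrite eq_sym nxy mrelC.
- case/andP => nxy hm; apply/existsP; exists x; apply/existsP; exists y.
  by rewrite eqxx nxy hm.
Qed.

Lemma mg_graph n c m : is_graph (mgraph n c m).
Proof.
apply/forallP => e; apply/implyP; rewrite inE.
by case/existsP => x /existsP [y /and3P [/eqP -> nxy _]]; rewrite cards2 nxy.
Qed.

Lemma mg_nonedges n c m : c + m.*2 <= n.+1 -> #|nonedges (mgraph n.+1 c m)| = m.
Proof.
move=> hn.
pose g (k : 'I_m) : {set 'I_n.+1} := [set inord (c + k.*2); inord (c + k.*2).+1].
have gin (k : 'I_m) : ((inord (c + k.*2) : 'I_n.+1) : nat) = c + k.*2.
  by rewrite inordK //; have := ltn_ord k; lia.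
have gin1 (k : 'I_m) : ((inord (c + k.*2).+1 : 'I_n.+1) : nat) = (c + k.*2).+1.
  by rewrite inordK //; have := ltn_ord k; lia.
have -> : nonedges (mgraph n.+1 c m) = g @: setT.
  apply/setP => e; rewrite inE; apply/andP/imsetP.
  - case=> /cards2P [x [y [nxy ->]]]; rewrite mem_mg nxy /= negbK => hm.
    move: (hm) => /and5P [h1 h2 h3 h4 /eqP h5].
    have hk : (x - c)./2 < m by lia.
    exists (Ordinal hk) => //; rewrite /g.
    have nxy' : (x : nat) != y by [].
    have [[e1 e2] | [e1 e2]] : ((x : nat) = c + (x - c)./2.*2 /\ (y : nat) = (c + (x - c)./2.*2).+1) \/
                     ((x : nat) = (c + (x - c)./2.*2).+1 /\ (y : nat) = c + (x - c)./2.*2).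
      by move/eqP: nxy'; lia.
    + by congr setU; congr set1; apply: val_inj; rewrite /= ?inordK //; lia.
    + rewrite set2C; congr setU; congr set1; apply: val_inj; rewrite /= ?inordK //; lia.
  - case=> k _ ->; rewrite /g cards2 mem_mg -(inj_eq val_inj) /= gin gin1.
    have hk := ltn_ord k.
    have ne : (c + k.*2 != (c + k.*2).+1) by rewrite neq_ltn ltnSn.
    rewrite ne /=; split => //; rewrite negbK /mrel.
    by apply/and5P; split; try lia; apply/eqP; lia.
rewrite card_in_imset ?cardsT ?card_ord // => k k' _ _ E.
have := set21 (inord (c + k.*2) : 'I_n.+1) (inord (c + k.*2).+1).
rewrite -/(g k) E /g in_set2 -!(inj_eq val_inj) /= !gin gin1.
by case/orP => /eqP h; apply: val_inj => /=; lia.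
Qed.

Definition ptm n (c : nat) (x : 'I_n.+1) : 'I_n.+1 :=
  inord (if odd (x - c) then (x : nat).-1 else (x : nat).+1).

Lemma ptm_spec n c m (x : 'I_n.+1) : c <= x -> x < c + m.*2 -> c + m.*2 <= n.+1 ->
  ((ptm c x : nat) != x) && mrel c m x (ptm c x).
Proof.
move=> h1 h2 h3; rewrite /ptm.
case: (boolP (odd (x - c))) => ho.
- have hx : ((x : nat).-1 <= n) by have := ltn_ord x; lia.
  rewrite inordK //.
  have hc : c < x.
    case: (ltnP c x) => // hh.
    have e : x - c = 0 by lia.
    by rewrite e in ho.
  have hh : (x - c)./2 = ((x : nat).-1 - c)./2.
    have := odd_double_half (x - c); rewrite ho /= => e.
    lia.
  apply/andP; split; first by apply/eqP; lia.
  by apply/and5P; split; try lia; apply/eqP.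
- have hx : ((x : nat).+1 <= n) by have := odd_double_half (x - c); rewrite (negbTE ho) /=; lia.
  rewrite inordK; last by lia.
  have hh : (x - c)./2 = ((x : nat).+1 - c)./2.
    have := odd_double_half (x - c); rewrite (negbTE ho) /= => e.
    lia.
  apply/andP; split; first by apply/eqP; lia.
  by apply/and5P; split; try lia; apply/eqP.
Qed.

Lemma block c m x y z : mrel c m x z -> mrel c m y z -> x != z -> y != z -> x = y.
Proof.
move=> /and5P [a1 a2 a3 a4 /eqP a5] /and5P [b1 b2 b3 b4 /eqP b5] /eqP h1 /eqP h2.
lia.
Qed.

Lemma noadj_out n p (G : graph n) (s P : {set 'I_n}) x w :
  (s, P) \in Cfg p G -> x \in s -> w != x -> [set x; w] \notin G -> w \notin s :|: P.
Proof.
case/CfgP => cs cP dP sG hG xs nwx nG; rewrite inE negb_or; apply/andP; split.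
- apply/negP => ws; move/negP: nG; apply.
  suff -> : [set x; w] = s by [].
  apply/eqP; rewrite eqEcard cs cards2 eq_sym nwx andbT.
  by apply/subsetP => z /set2P [] ->.
- by apply/negP => wP; move/negP: nG; apply; apply: hG.
Qed.

Lemma card_sP n p (G : graph n) (s P : {set 'I_n}) :
  (s, P) \in Cfg p G -> #|s :|: P| = p.+2.
Proof.
case/CfgP => cs cP dP _ _.
by move: (leq_card_setU s P).2; rewrite dP => /eqP ->; rewrite cs cP.
Qed.

Lemma Z1 p q : p = q.*2.+1 -> Cfg p (mgraph p.+2 1 q.+1) = set0.
Proof.
move=> pq; apply/setP => [[s P]]; rewrite in_set0; apply/negP => h.
have U : s :|: P = setT.
  apply/eqP; rewrite eqEcard subsetT cardsT (card_sP h) /=.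
  by have := card_ord p.+2; move=> ->.
have := h; case/CfgP => cs _ _ _ _.
have : #|s| == 2 by rewrite cs.
case/cards2P => x [y [nxy es]].
have [z [zs z1]] : exists z : 'I_p.+2, z \in s /\ 1 <= z.
  case: (leqP 1 x) => hx; first by exists x; rewrite es set21.
  exists y; rewrite es set22; split => //.
  by case: (leqP 1 y) => // hy; move: nxy; rewrite -(inj_eq val_inj) /=; lia.
have hz2 : z < 1 + q.+1.*2 by have := ltn_ord z; lia.
have hz3 : 1 + q.+1.*2 <= p.+2 by lia.
have /andP [ne hm] := ptm_spec z1 hz2 hz3.
have : ptm 1 z \notin s :|: P.
  apply: (noadj_out h zs).
  - by rewrite -(inj_eq val_inj).
  - by rewrite mem_mg negb_and negbK hm orbT.
by rewrite U inE.
Qed.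

Lemma ptm_out n p c m (s P : {set 'I_n.+1}) x :
  (s, P) \in Cfg p (mgraph n.+1 c m) -> x \in s -> c <= x -> x < c + m.*2 ->
  c + m.*2 <= n.+1 -> ptm c x \notin s :|: P.
Proof.
move=> h xs h1 h2 h3.
have /andP [ne hm] := ptm_spec h1 h2 h3.
apply: (noadj_out h xs).
- by rewrite -(inj_eq val_inj).
- by rewrite mem_mg negb_and negbK hm orbT.
Qed.

Lemma one_out n p (G : graph n.+1) (s P : {set 'I_n.+1}) :
  n.+1 = p.+3 -> (s, P) \in Cfg p G ->
  exists z, z \notin s :|: P /\ forall w, w \notin s :|: P -> w = z.
Proof.
move=> np h.
have := cardsC (s :|: P); rewrite (card_sP h).
have -> := card_ord n.+1 => e.
have : #|~: (s :|: P)| == 1 by apply/eqP; lia.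
case/cards1P => z Ez; exists z; split.
  have : z \in ~: (s :|: P) by rewrite Ez set11.
  by rewrite inE.
move=> w hw.
have : w \in ~: (s :|: P) by rewrite inE.
by rewrite Ez => /set1P.
Qed.

Lemma Z2 p q : p = q.*2.+1 -> Cfg p (mgraph p.+3 0 q.+2) = set0.
Proof.
move=> pq; apply/setP => [[s P]]; rewrite in_set0; apply/negP => h.
have [z [_ hz]] := one_out (erefl _) h.
have := h; case/CfgP => cs _ _ _ _.
have : #|s| == 2 by rewrite cs.
case/cards2P => x [y [nxy es]].
have b1 : 0 + q.+2.*2 <= p.+3 by lia.
have hx : x < 0 + q.+2.*2 by have := ltn_ord x; lia.
have hy : y < 0 + q.+2.*2 by have := ltn_ord y; lia.
have /andP [nex hmx] := ptm_spec (leq0n x) hx b1.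
have /andP [ney hmy] := ptm_spec (leq0n y) hy b1.
have xs : x \in s by rewrite es set21.
have ys : y \in s by rewrite es set22.
have ex := hz _ (ptm_out h xs (leq0n x) hx b1).
have ey := hz _ (ptm_out h ys (leq0n y) hy b1).
have e : (ptm 0 y : nat) = ptm 0 x by rewrite ex ey.
rewrite e in hmy ney.
move/negP: nxy; apply; apply/eqP; apply: val_inj.
by apply: (block hmx hmy); rewrite eq_sym.
Qed.

Lemma allT p n (G : graph n.+1) (s P : {set 'I_n.+1}) :
  n.+1 = p.+2 -> (s, P) \in Cfg p G -> s :|: P = setT.
Proof.
move=> np h; apply/eqP; rewrite eqEcard subsetT cardsT (card_sP h) /=.
by have := card_ord n.+1; move=> ->; rewrite np.
Qed.

Lemma E1 p q : p = q.*2.+1 -> #|Cfg p (mgraph p.+2 3 q)| <= 3.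
Proof.
move=> pq.
set T3 := [set x : 'I_p.+2 | x < 3].
have hs (s P : {set 'I_p.+2}) : (s, P) \in Cfg p (mgraph p.+2 3 q) ->
    s \subset T3 /\ P = ~: s.
  move=> h; have U := allT (erefl _) h.
  have := h; case/CfgP => _ _ dP _ _.
  split.
  - apply/subsetP => x xs; rewrite inE; case: (ltnP x 3) => // h3.
    have b1 : 3 + q.*2 <= p.+2 by lia.
    have hx : x < 3 + q.*2 by have := ltn_ord x; lia.
    by have := ptm_out h xs h3 hx b1; rewrite U inE.
  - apply/setP => w; rewrite inE; case ws: (w \in s).
    + by rewrite (disjointFr dP ws).
    + have : w \in s :|: P by rewrite U inE.
      by rewrite inE ws.
have cT : #|T3| <= 3.
  have sub : T3 \subset (fun k : 'I_3 => (inord k : 'I_p.+2)) @: setT.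
    apply/subsetP => x; rewrite inE => hx; apply/imsetP; exists (Ordinal hx) => //.
    by apply: val_inj; rewrite /= inordK.
  apply: leq_trans (subset_leq_card sub) _; apply: leq_trans (leq_imset_card _ _) _.
  by rewrite cardsT card_ord.
have inj : {in Cfg p (mgraph p.+2 3 q) &, injective (@fst {set 'I_p.+2} {set 'I_p.+2})}.
  move=> [s P] [s' P'] h h' /= e; subst s'.
  by have [_ ->] := hs _ _ h; have [_ ->] := hs _ _ h'.
rewrite -(card_in_imset inj).
have sub : fst @: Cfg p (mgraph p.+2 3 q) \subset [set s : {set 'I_p.+2} | s \subset T3 & #|s| == 2].
  apply/subsetP => s /imsetP [[s0 P] h ->] /=; rewrite inE.
  have [-> _] := hs _ _ h.
  by have := h; case/CfgP => -> _ _ _ _.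
apply: leq_trans (subset_leq_card sub) _.
rewrite cards_draws.
by apply: leq_trans (leq_bin2l 2 cT) _.
Qed.

Lemma E2 p q : p = q.*2.+1 -> #|Cfg p (mgraph p.+3 2 q.+1)| <= 3 * p.+1.
Proof.
move=> pq.
set D := ~:[set (ord0 : 'I_p.+3); inord 1].
have cD : #|D| = p.+1 := card01C p.+1.
set F1 := (fun z => ([set (ord0 : 'I_p.+3); inord 1], ~:(z |: [set ord0; inord 1]))) @: D.
set F2 := (fun v => ([set (ord0 : 'I_p.+3); v], ~:(ptm 2 v |: [set ord0; v]))) @: D.
set F3 := (fun v => ([set (inord 1 : 'I_p.+3); v], ~:(ptm 2 v |: [set inord 1; v]))) @: D.
have b1 : 2 + q.+1.*2 <= p.+3 by lia.
have sub : Cfg p (mgraph p.+3 2 q.+1) \subset F1 :|: F2 :|: F3.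
  apply/subsetP => [[s P]] h.
  have [z [zo hz]] := one_out (erefl _) h.
  have := h; case/CfgP => cs _ dP _ _.
  have EP : P = ~:(z |: s).
    apply/setP => w; rewrite !inE.
    case ws: (w \in s); first by rewrite (disjointFr dP ws) orbT.
    case: (eqVneq w z) => [-> | nwz] /=.
    - by move: zo; rewrite inE negb_or => /andP [_ /negbTE].
    - apply/negPn/negP => wP; move/eqP: nwz; apply; apply: hz.
      by rewrite inE ws.
  have : #|s| == 2 by rewrite cs.
  case/cards2P => x0 [y0 [nxy0 es0]].
  have [x [y [lxy es]]] : exists x y : 'I_p.+3, x < y /\ s = [set x; y].
    case: (ltngtP x0 y0) => h0.
    - by exists x0, y0.
    - by exists y0, x0; rewrite set2C.
    - by move: nxy0; rewrite -(inj_eq val_inj) /= h0 eqxx.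
  have xs : x \in s by rewrite es set21.
  have ys : y \in s by rewrite es set22.
  have zs : z \notin s by move: zo; rewrite inE negb_or => /andP [].
  rewrite EP es.
  case: (ltnP y 2) => hy.
  - have ex : x = ord0 by apply: val_inj => /=; lia.
    have ey : y = inord 1 by apply: val_inj; rewrite /= inordK //; lia.
    rewrite ex ey !inE; apply/orP; left; apply/orP; left.
    apply/imsetP; exists z => //; rewrite inE -ex -ey -es //.
  - have hy2 : y < 2 + q.+1.*2 by have := ltn_ord y; lia.
    have ez := hz _ (ptm_out h ys hy hy2 b1).
    have hx : x < 2.
      case: (ltnP x 2) => // hx.
      have hx2 : x < 2 + q.+1.*2 by have := ltn_ord x; lia.
      have ez' := hz _ (ptm_out h xs hx hx2 b1).
      have /andP [nex hmx] := ptm_spec hx hx2 b1.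
      have /andP [ney hmy] := ptm_spec hy hy2 b1.
      have e : (ptm 2 y : nat) = ptm 2 x by rewrite ez ez'.
      rewrite e in hmy ney.
      have e2 := block hmx hmy (_ : (x : nat) != ptm 2 x) (_ : (y : nat) != ptm 2 x).
      rewrite e2 ?ltnn // in lxy; by rewrite eq_sym.
    have yD : y \in D by rewrite notin01.
    case: (ltnP x 1) => hx1.
    + have ex : x = ord0 by apply: val_inj => /=; lia.
      rewrite ex !inE; apply/orP; left; apply/orP; right.
      by apply/imsetP; exists y => //; rewrite -ez -ex.
    + have ex : x = inord 1 by apply: val_inj; rewrite /= inordK //; lia.
      rewrite ex !inE; apply/orP; right.
      by apply/imsetP; exists y => //; rewrite -ez -ex.
apply: leq_trans (subset_leq_card sub) _.
apply: leq_trans (leq_card_setU _ _).1 _.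
have c1 : #|F1| <= p.+1 by apply: leq_trans (leq_imset_card _ _) _; rewrite cD.
have c2 : #|F2| <= p.+1 by apply: leq_trans (leq_imset_card _ _) _; rewrite cD.
have c3 : #|F3| <= p.+1 by apply: leq_trans (leq_imset_card _ _) _; rewrite cD.
apply: leq_trans (leq_add (leq_card_setU F1 F2).1 (leqnn _)) _.
have -> : 3 * p.+1 = p.+1 + p.+1 + p.+1 by lia.
by apply: leq_add; [apply: leq_add|].
Qed.

Lemma ex_eq m n (H : graph m) v :
  (exists G : graph n, [/\ is_graph G, copies H G = 0 & #|G| = v]) ->
  (forall G : graph n, is_graph G -> v < #|G| -> 0 < copies H G) -> ex n H = v.
Proof.
move=> [G0 [g0 c0 s0]] hall; rewrite /ex; apply/eqP; rewrite eqn_leq; apply/andP; split.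
- apply/bigmax_leqP => G /andP [gG /eqP cG]; rewrite leqNgt; apply/negP => h.
  by have := hall G gG h; rewrite cG.
- rewrite -s0; apply: (leq_bigmax_cond G0); by rewrite g0 c0 eqxx.
Qed.

Theorem theorem4 (p : nat) (hp3 : 3 <= p) (hodd : odd p) :
  ((forall G : graph p.+2, is_graph G ->
      #|G| = (ex p.+2 (book p)).+1 -> 3 <= copies (book p) G) /\
   (exists G : graph p.+2, [/\ is_graph G,
      #|G| = (ex p.+2 (book p)).+1 & copies (book p) G = 3])) /\
  ((forall G : graph p.+3, is_graph G ->
      #|G| = (ex p.+3 (book p)).+1 -> 3 * p.+1 <= copies (book p) G) /\
   (exists G : graph p.+3, [/\ is_graph G,
      #|G| = (ex p.+3 (book p)).+1 & copies (book p) G = 3 * p.+1])).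
Proof.
have hq := odd_double_half p; rewrite hodd /= in hq.
set q := p./2 in hq.
have pq : p = q.*2.+1 by lia.
split.
- have hG0 := card_nonedges (mg_graph p.+2 1 q.+1).
  rewrite mg_nonedges in hG0; last by lia.
  have hG1 := card_nonedges (mg_graph p.+2 3 q).
  rewrite mg_nonedges in hG1; last by lia.
  have exA : ex p.+2 (book p) = 'C(p.+2, 2) - q.+1.
    apply: ex_eq.
    + exists (mgraph p.+2 1 q.+1); split; first exact: mg_graph.
      * by rewrite copies_eq ?mg_graph // Z1 // cards0.
      * lia.
    + move=> G gG hv; rewrite copies_eq //.
      have := card_nonedges gG => hc.
      apply: leq_trans (LB1 pq gG _); first by [].
      lia.
  split.
  + move=> G gG hs; rewrite exA in hs; rewrite copies_eq //; apply: (LB1 pq gG).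
    have := card_nonedges gG; lia.
  + exists (mgraph p.+2 3 q); split; first exact: mg_graph.
    * rewrite exA; lia.
    * rewrite copies_eq ?mg_graph //; apply/eqP; rewrite eqn_leq E1 //=.
      by apply: (LB1 pq (mg_graph _ _ _)); rewrite mg_nonedges; lia.
- have hG0 := card_nonedges (mg_graph p.+3 0 q.+2).
  rewrite mg_nonedges in hG0; last by lia.
  have hG1 := card_nonedges (mg_graph p.+3 2 q.+1).
  rewrite mg_nonedges in hG1; last by lia.
  have exB : ex p.+3 (book p) = 'C(p.+3, 2) - q.+2.
    apply: ex_eq.
    + exists (mgraph p.+3 0 q.+2); split; first exact: mg_graph.
      * by rewrite copies_eq ?mg_graph // Z2 // cards0.
      * lia.
    + move=> G gG hv; rewrite copies_eq //.
      have := card_nonedges gG => hc.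
      apply: leq_trans (LB2 pq gG _); first by [].
      lia.
  split.
  + move=> G gG hs; rewrite exB in hs; rewrite copies_eq //; apply: (LB2 pq gG).
    have := card_nonedges gG; lia.
  + exists (mgraph p.+3 2 q.+1); split; first exact: mg_graph.
    * rewrite exB; lia.
    * rewrite copies_eq ?mg_graph //; apply/eqP; rewrite eqn_leq E2 //=.
      by apply: (LB2 pq (mg_graph _ _ _)); rewrite mg_nonedges; lia.
Qed.
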